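(* Let $\oplus$ be a combinator whose domain is the set of all pairs of tpos over $W$. Then $\oplus$ is a TeamQueue combinator if and only if $\oplus$ is basic and satisfies, for all pairs $\langle\preceq_1,\preceq_2\rangle$ and all $x,y,z \in W$: ($\oplus$SPU+) if $x \prec_1 y$ and $z \prec_2 y$ then $x \prec_{1\oplus 2} y$ or $z \prec_{1\oplus 2} y$; ($\oplus$WPU+) if $x \preceq_1 y$ and $z \preceq_2 y$ then $x \preceq_{1\oplus 2} y$ or $z \preceq_{1\oplus 2} y$; ($\oplus$NO) for $i \neq j$ in $\{1,2\}$, if $x \prec_i y$ and $z \preceq_j y$ then $x \prec_{1\oplus 2} y$ or $z \preceq_{1\oplus 2} y$.
   Context: $W$ is a finite nonempty set (of possible worlds). A tpo is a total preorder on $W$; $\prec$ and $\sim$ denote strict and symmetric parts. For $S \subseteq W$, $\min(\preceq, S) = \{x \in S : x \preceq y \text{ for all } y \in S\}$. A combinator $\oplus$ maps pairs of tpos $\langle\preceq_1,\preceq_2\rangle$ in its domain to a tpo $\preceq_{1\oplus 2}$. It is basic if $\min(\preceq_{1\oplus 2}, W) = \min(\preceq_1, W) \cup \min(\preceq_2, W)$ for every pair in its domain. $\oplus$ is a TeamQueue combinator if for each pair $\langle\preceq_1,\preceq_2\rangle$ in its domain there is a sequence $\langle a(i)\rangle_{i \in \mathbb{N}}$ (depending on the pair) with $\emptyset \neq a(i) \subseteq \{1,2\}$ for all $i$ and $a(1) = \{1,2\}$, such that $\preceq_{1\oplus 2}$ is the tpo whose ordered partition into ranks (lowest = most plausible first)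 is $\langle T_1, \ldots, T_m\rangle$, where inductively $T_i = \bigcup_{j \in a(i)} \min(\preceq_j, \bigcap_{k<i} T_k^c)$ ($T^c$ the complement of $T$ in $W$) and $m$ is minimal with $\bigcup_{i \le m} T_i = W$; i.e. $x \preceq_{1\oplus 2} y$ iff the index of the cell containing $x$ is at most that of the cell containing $y$. *)

(* Defs.v *)
From mathcomp Require Import all_boot.
Set Implicit Arguments. Unset Strict Implicit. Unset Printing Implicit Defensive.

Section TPO.
Variable W : finType.

Definition is_tpo (r : rel W) : Prop := total r /\ transitive r.

Definition tpo := {r : rel W | is_tpo r}.

Definition le (p : tpo) (x y : W) : bool := sval p x y.
Definition lt (p : tpo) (x y : W) : bool := le p x y && ~~ le p y x.

Definition minset (p : tpo) (S : {set W}) : {set W} :=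
  [set x in S | [forall y in S, le p x y]].

Definition combinator := tpo -> tpo -> tpo.

Definition basic (comb : combinator) : Prop :=
  forall p1 p2 : tpo,
    minset (comb p1 p2) [set: W] = minset p1 [set: W] :|: minset p2 [set: W].

(* index j : 'I_2, with 0 standing for 1 and 1 standing for 2 *)
Definition sel (p1 p2 : tpo) (j : 'I_2) : tpo :=
  if nat_of_ord j == 0%N then p1 else p2.

(* rest a i = complement of T_1 u ... u T_i ; cell a i = T_i (for i >= 1) *)
Fixpoint rest (p1 p2 : tpo) (a : nat -> {set 'I_2}) (i : nat) : {set W} :=
  match i with
  | 0 => [set: W]
  | i'.+1 => rest p1 p2 a i' :\:
             \bigcup_(j in a i'.+1) minset (sel p1 p2 j) (rest p1 p2 a i')
  end.

Definition cell (p1 p2 : tpo) (a : nat -> {set 'I_2}) (i : nat) : {set W} :=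
  \bigcup_(j in a i) minset (sel p1 p2 j) (rest p1 p2 a i.-1).

Definition TeamQueue (comb : combinator) : Prop :=
  forall p1 p2 : tpo,
  exists a : nat -> {set 'I_2},
    [/\ (forall i, (1 <= i)%N -> a i != set0),
        a 1%N = [set: 'I_2] &
        exists m : nat,
          [/\ rest p1 p2 a m = set0,
              (forall k, (k < m)%N -> rest p1 p2 a k != set0) &
              forall x y : W,
                le (comb p1 p2) x y <->
                exists i j : nat,
                  [/\ (1 <= i)%N, (i <= j)%N, (j <= m)%N,
                      x \in cell p1 p2 a i & y \in cell p1 p2 a j]]].

Definition SPU_plus (comb : combinator) : Prop :=
  forall (p1 p2 : tpo) (x y z : W),
    lt p1 x y -> lt p2 z y -> lt (comb p1 p2) x y \/ lt (comb p1 p2) z y.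

Definition WPU_plus (comb : combinator) : Prop :=
  forall (p1 p2 : tpo) (x y z : W),
    le p1 x y -> le p2 z y -> le (comb p1 p2) x y \/ le (comb p1 p2) z y.

Definition NO (comb : combinator) : Prop :=
  forall (p1 p2 : tpo) (x y z : W),
    (lt p1 x y -> le p2 z y -> lt (comb p1 p2) x y \/ le (comb p1 p2) z y) /\
    (lt p2 x y -> le p1 z y -> lt (comb p1 p2) x y \/ le (comb p1 p2) z y).

End TPO.

(* Main.v *)
Require Import Defs.
From mathcomp Require Import all_boot zify.
Require Import Defs.
Set Implicit Arguments. Unset Strict Implicit. Unset Printing Implicit Defensive.

Section Aux.
Variable W : finType.
Implicit Types (p q : tpo W) (S : {set W}).

Lemma le_refl p x : le p x x.
Proof. case: p => r H; rewrite /le /=; case: H => tot _; by have := tot x x; rewrite orbb. Qed.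

Lemma le_trans p x y z : le p x y -> le p y z -> le p x z.
Proof. case: p => r H; rewrite /le /=; case: H => _ tr => h1 h2; exact: tr h1 h2. Qed.

Lemma le_total p x y : le p x y || le p y x.
Proof. case: p => r H; rewrite /le /=; case: H => tot _; exact: tot. Qed.

Lemma nlt_le p x y : ~~ lt p x y = le p y x.
Proof.
rewrite /lt negb_and negbK; case h: (le p x y) => //=.
by have := le_total p x y; rewrite h /= => ->.
Qed.

Lemma lt_nle p x y : lt p x y -> ~~ le p y x.
Proof. by case/andP. Qed.

Lemma minsetP p S x :
  reflect (x \in S /\ forall y, y \in S -> le p x y) (x \in minset p S).
Proof.
rewrite /minset inE; apply: (iffP andP) => [[xS /forall_inP H]|[xS H]]; split=> //.
by apply/forall_inP.
Qed.

Lemma minset_in p S x : x \in minset p S -> x \in S.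
Proof. by case/minsetP. Qed.

Lemma minset_le p S x y : x \in minset p S -> y \in S -> le p x y.
Proof. by case/minsetP => _ H; apply: H. Qed.

Lemma minset_ge p S x y : y \in minset p S -> x \in S -> le p x y -> x \in minset p S.
Proof.
move=> /minsetP [yS H] xS lxy; apply/minsetP; split=> // z zS.
exact: le_trans lxy (H z zS).
Qed.

Lemma notmin p S x : x \in S -> x \notin minset p S -> exists2 y, y \in S & lt p y x.
Proof.
move=> xS; rewrite /minset inE xS /= => /forall_inPn [y yS nle].
exists y => //; rewrite /lt nle andbT.
by have := le_total p x y; rewrite (negbTE nle).
Qed.

Lemma minset_n0 p S : S != set0 -> exists x, x \in minset p S.
Proof.
move eqn: #|S| => n; elim: n S eqn => [|n IH] S cS nS.
  by move: nS; rewrite -cards_eq0 cS.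
case/set0Pn: nS => s sS.
have cS' : #|S :\ s| = n by move: cS; rewrite (cardsD1 s) sS add1n => -[].
case: (boolP (S :\ s == set0)) => [/eqP e|ne].
  exists s; apply/minsetP; split=> // y yS.
  have: y \notin S :\ s by rewrite e inE.
  rewrite !inE yS andbT negbK => /eqP ->; exact: le_refl.
have [m /minsetP [mS' Hm]] := IH (S :\ s) cS' ne.
move: mS'; rewrite !inE => /andP [_ mS].
case: (boolP (le p m s)) => h.
  exists m; apply/minsetP; split=> // y yS.
  case: (eqVneq y s) => [->//|ys]; apply: Hm; by rewrite !inE ys yS.
have hs : le p s m by have := le_total p m s; rewrite (negbTE h).
exists s; apply/minsetP; split=> // y yS.
case: (eqVneq y s) => [->|ys]; first exact: le_refl.
apply: le_trans hs (Hm y _); by rewrite !inE ys yS.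
Qed.

Definition o1 : 'I_2 := @Ordinal 2 1 isT.

Lemma bigcup_selT p1 p2 S :
  \bigcup_(j in [set: 'I_2]) minset (sel p1 p2 j) S = minset p1 S :|: minset p2 S.
Proof.
apply/setP => x; rewrite inE; apply/bigcupP/orP.
  by case=> -[[|[|//]]] ? _ /= h; [left|right].
by case=> h; [exists ord0|exists o1].
Qed.

Lemma sel_cases p1 p2 (l : 'I_2) : sel p1 p2 l = p1 \/ sel p1 p2 l = p2.
Proof. by case: l => -[|[|//]] ? /=; [left|right]. Qed.

End Aux.

Section Back.
Variable W : finType.
Variables (c p1 p2 : tpo W).

Section Claim.
Variables q1 q2 : tpo W.
Hypothesis F1' : forall S, minset c S \subset minset q1 S :|: minset q2 S.
Hypothesis hW : forall x y z, le q1 x y -> le q2 z y -> le c x y \/ le c z y.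
Hypothesis hN : forall x y z, lt q2 x y -> le q1 z y -> lt c x y \/ le c z y.

Lemma claim S y w : y \in minset c S -> y \in minset q1 S -> w \in minset q1 S ->
  w \notin minset c S -> minset c S = minset q2 S.
Proof.
move=> yT yM1 wM1 wT.
have yS := minset_in yT; have wS := minset_in wM1.
have notle u : u \in S -> u \notin minset c S -> forall y', y' \in minset c S -> ~~ le c u y'.
  move=> uS uT y' y'T; apply/negP => h; by rewrite (minset_ge y'T uS h) in uT.
have sub2 : minset q2 S \subset minset c S.
  apply/subsetP => m mM2; apply/negPn/negP => mT.
  have mS := minset_in mM2.
  case: (hW (minset_le wM1 yS) (minset_le mM2 yS)) => h.
    by move: (notle w wS wT y yT); rewrite h.
  by move: (notle m mS mT y yT); rewrite h.
have sub1 y' : y' \in minset c S -> y' \in minset q1 S -> y' \in minset q2 S.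
  move=> y'T y'M1; apply/negPn/negP => n2.
  have y'S := minset_in y'T.
  have [x xS lx] := notmin y'S n2.
  case: (hN lx (minset_le wM1 y'S)) => h.
    by move: (lt_nle h); rewrite (minset_le y'T xS).
  by move: (notle w wS wT y' y'T); rewrite h.
apply/setP => t; apply/idP/idP => [tT|/(subsetP sub2)//].
have := subsetP (F1' S) t tT; rewrite inE => /orP [tM1|//].
exact: sub1.
Qed.
End Claim.

Hypothesis hB : minset c [set: W] = minset p1 [set: W] :|: minset p2 [set: W].
Hypothesis hS : forall x y z, lt p1 x y -> lt p2 z y -> lt c x y \/ lt c z y.
Hypothesis hW : forall x y z, le p1 x y -> le p2 z y -> le c x y \/ le c z y.
Hypothesis hN1 : forall x y z, lt p1 x y -> le p2 z y -> lt c x y \/ le c z y.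
Hypothesis hN2 : forall x y z, lt p2 x y -> le p1 z y -> lt c x y \/ le c z y.

Lemma F1 S : minset c S \subset minset p1 S :|: minset p2 S.
Proof.
apply/subsetP => y yT; have yS := minset_in yT; rewrite inE.
case: (boolP (y \in minset p1 S)) => //= n1.
apply/negPn/negP => n2.
have [x xS lx] := notmin yS n1.
have [z zS lz] := notmin yS n2.
case: (hS lx lz) => h; move: (lt_nle h); by rewrite ?(minset_le yT xS) ?(minset_le yT zS).
Qed.

Lemma F1s S : minset c S \subset minset p2 S :|: minset p1 S.
Proof. rewrite setUC; exact: F1. Qed.

Lemma hWs x y z : le p2 x y -> le p1 z y -> le c x y \/ le c z y.
Proof. move=> h1 h2; case: (hW h2 h1); tauto. Qed.

Section Trich.
Variables q1 q2 : tpo W.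
Hypothesis G1 : forall S, minset c S \subset minset q1 S :|: minset q2 S.
Hypothesis G1s : forall S, minset c S \subset minset q2 S :|: minset q1 S.
Hypothesis gW : forall x y z, le q1 x y -> le q2 z y -> le c x y \/ le c z y.
Hypothesis gWs : forall x y z, le q2 x y -> le q1 z y -> le c x y \/ le c z y.
Hypothesis gN : forall x y z, lt q2 x y -> le q1 z y -> lt c x y \/ le c z y.
Hypothesis gNs : forall x y z, lt q1 x y -> le q2 z y -> lt c x y \/ le c z y.

Lemma trich S y : y \in minset c S -> y \in minset q1 S ->
  [\/ minset c S = minset q1 S :|: minset q2 S, minset c S = minset q1 S
    | minset c S = minset q2 S].
Proof.
move=> yT yM1.
case: (boolP (minset q1 S \subset minset c S)) => s1; last first.
  case/subsetPn: s1 => w wM1 wT; apply: Or33; exact: (claim G1 gW gN yT yM1 wM1 wT).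
case: (boolP (minset q2 S \subset minset c S)) => s2.
  by apply: Or31; apply/eqP; rewrite eqEsubset G1 subUset s1 s2.
case/subsetPn: s2 => w wM2 wT.
case: (boolP [exists t, (t \in minset c S) && (t \in minset q2 S)]).
  case/existsP => t /andP [tT tM2]; apply: Or32.
  exact: (claim G1s gWs gNs tT tM2 wM2 wT).
move=> ne; apply: Or32; apply/eqP; rewrite eqEsubset s1 andbT.
apply/subsetP => t tT; have := subsetP (G1 S) t tT; rewrite inE => /orP [//|tM2].
have : [exists t, (t \in minset c S) && (t \in minset q2 S)].
  by apply/existsP; exists t; rewrite tT tM2.
by rewrite (negbTE ne).
Qed.
End Trich.

Lemma trich_all S :
  [\/ minset c S = minset p1 S :|: minset p2 S, minset c S = minset p1 S
    | minset c S = minset p2 S].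
Proof.
case: (boolP (minset c S == set0)) => [/eqP e|].
  case: (boolP (S == set0)) => [/eqP -> |nS].
    apply: Or32; apply/setP => x; rewrite /minset !inE; done.
  have [x xT] := minset_n0 c nS; by rewrite e inE in xT.
case/set0Pn => y yT; have := subsetP (F1 S) y yT; rewrite inE => /orP [yM|yM].
  exact: (trich F1 F1s hW hWs hN2 hN1 yT yM).
case: (trich F1s F1 hWs hW hN1 hN2 yT yM) => h.
- by apply: Or31; rewrite setUC.
- by apply: Or33.
- by apply: Or32.
Qed.

Definition chooseA (S : {set W}) : {set 'I_2} :=
  if minset c S == minset p1 S :|: minset p2 S then setT
  else if minset c S == minset p1 S then [set ord0] else [set o1].

Lemma chooseA_spec S :
  \bigcup_(j in chooseA S) minset (sel p1 p2 j) S = minset c S.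
Proof.
rewrite /chooseA; case: ifP => [/eqP -> | n0]; first exact: bigcup_selT.
case: ifP => [/eqP -> | n1]; first by rewrite big_set1.
rewrite big_set1 /=.
case: (trich_all S) => h; [by rewrite h eqxx in n0 | by rewrite h eqxx in n1 |by rewrite h].
Qed.

Lemma chooseA_n0 S : chooseA S != set0.
Proof.
rewrite /chooseA; case: ifP => _; [|case: ifP => _]; apply/set0Pn;
  [exists ord0|exists ord0|exists o1]; by rewrite !inE.
Qed.

End Back.

Section Back2.
Variable W : finType.
Variables (c p1 p2 : tpo W).
Hypothesis hB : minset c [set: W] = minset p1 [set: W] :|: minset p2 [set: W].
Hypothesis hS : forall x y z, lt p1 x y -> lt p2 z y -> lt c x y \/ lt c z y.
Hypothesis hW : forall x y z, le p1 x y -> le p2 z y -> le c x y \/ le c z y.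
Hypothesis hN1 : forall x y z, lt p1 x y -> le p2 z y -> lt c x y \/ le c z y.
Hypothesis hN2 : forall x y z, lt p2 x y -> le p1 z y -> lt c x y \/ le c z y.

Fixpoint Rc n : {set W} :=
  match n with 0 => setT | n'.+1 => Rc n' :\: minset c (Rc n') end.

Definition aa n := chooseA c p1 p2 (Rc n.-1).

Lemma rest_Rc n : rest p1 p2 aa n = Rc n.
Proof. elim: n => //= n IH; rewrite IH /aa /= (chooseA_spec hS hW hN1 hN2). done. Qed.

Lemma cell_Rc n : cell p1 p2 aa n.+1 = minset c (Rc n).
Proof. rewrite /cell /= rest_Rc; exact: (chooseA_spec hS hW hN1 hN2). Qed.

Lemma Rc_dec m n : m <= n -> Rc n \subset Rc m.
Proof.
elim: n => [|n IH]; first by rewrite leqn0 => /eqP ->.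
rewrite leq_eqVlt => /orP [/eqP -> // | lt]; rewrite ltnS in lt.
apply: subset_trans (IH lt); exact: subsetDl.
Qed.

Lemma Rc_card n : (Rc n == set0) || (n + #|Rc n| <= #|W|).
Proof.
elim: n => [|n IH] /=; first by rewrite cardsT add0n leqnn orbT.
case: (boolP (Rc n == set0)) => [/eqP e|ne].
  by rewrite e set0D eqxx.
rewrite (negbTE ne) /= in IH.
have [t tT] := minset_n0 c ne.
have sub : Rc n :\: minset c (Rc n) \subset Rc n :\ t.
  apply/subsetP => x; rewrite in_setD in_setD1 => /andP [xT xR]; rewrite xR andbT.
  apply/eqP => e; by rewrite e tT in xT.
have h := subset_leq_card sub.
have hc := cardsD1 t (Rc n); rewrite (minset_in tT) /= in hc.
apply/orP; right; lia.
Qed.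

Lemma Rc_end : exists n, Rc n == set0.
Proof.
exists #|W|.+1; have := Rc_card #|W|.+1; case/orP => // h; lia.
Qed.

Lemma find_k x m : x \notin Rc m -> exists2 k, k < m & x \in minset c (Rc k).
Proof.
elim: m => [|m IH]; first by rewrite /= inE.
case: (boolP (x \in Rc m)) => xm.
  move=> /= nx; exists m => //; move: nx; by rewrite inE xm andbT negbK.
move=> _; have [k km xk] := IH xm; exists k => //; by rewrite ltnS ltnW.
Qed.

Lemma le_char x y k l : x \in minset c (Rc k) -> y \in minset c (Rc l) ->
  le c x y = (k <= l).
Proof.
move=> xT yT; case: (leqP k l) => h.
  apply: minset_le xT _; exact: (subsetP (Rc_dec h)) _ (minset_in yT).
apply/negP => lxy.
have xRl1 : x \in Rc l.+1 := subsetP (Rc_dec h) _ (minset_in xT).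
have xRl : x \in Rc l := subsetP (Rc_dec (leqnSn l)) _ xRl1.
have := minset_ge yT xRl lxy; move: xRl1; rewrite /= inE => /andP [/negP nx _]; exact: nx.
Qed.

Lemma back_TQ : exists a : nat -> {set 'I_2},
    [/\ (forall i, (1 <= i)%N -> a i != set0),
        a 1%N = [set: 'I_2] &
        exists m : nat,
          [/\ rest p1 p2 a m = set0,
              (forall k, (k < m)%N -> rest p1 p2 a k != set0) &
              forall x y : W,
                le c x y <->
                exists i j : nat,
                  [/\ (1 <= i)%N, (i <= j)%N, (j <= m)%N,
                      x \in cell p1 p2 a i & y \in cell p1 p2 a j]]].
Proof.
exists aa; split.
- move=> i _; exact: chooseA_n0.
- by rewrite /aa /chooseA /= hB eqxx.
case: (ex_minnP Rc_end) => m /eqP Hm Hmin.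
exists m; split.
- by rewrite rest_Rc.
- move=> k km; rewrite rest_Rc; apply/negP => /Hmin; by rewrite leqNgt km.
move=> x y; split.
  move=> lxy.
  have : x \notin Rc m by rewrite Hm inE.
  case/find_k => kx kxm xk.
  have : y \notin Rc m by rewrite Hm inE.
  case/find_k => ky kym yk.
  exists kx.+1, ky.+1; rewrite !cell_Rc; split => //.
  by rewrite ltnS -(le_char xk yk).
case=> i [j [i1 ij jm xi yj]].
case: i i1 ij xi => // i _ ij xi.
case: j ij jm yj => // j ij _ yj.
rewrite !cell_Rc in xi yj; rewrite (le_char xi yj); exact: ij.
Qed.

End Back2.

Section Fwd.
Variable W : finType.
Variables (c p1 p2 : tpo W) (a : nat -> {set 'I_2}) (m : nat).
Hypothesis Hrm : rest p1 p2 a m = set0.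
Hypothesis Hiff : forall x y : W,
                le c x y <->
                exists i j : nat,
                  [/\ (1 <= i)%N, (i <= j)%N, (j <= m)%N,
                      x \in cell p1 p2 a i & y \in cell p1 p2 a j].

Local Notation rest := (rest p1 p2 a).
Local Notation cell := (cell p1 p2 a).

Lemma cell_sub i : cell i.+1 \subset rest i.
Proof. apply/bigcupsP => j _; apply/subsetP => x; exact: minset_in. Qed.

Lemma restS k x : (x \in rest k.+1) = (x \notin cell k.+1) && (x \in rest k).
Proof. by rewrite [in LHS]/= in_setD. Qed.

Lemma rest_dec i j : i <= j -> rest j \subset rest i.
Proof.
elim: j => [|j IH]; first by rewrite leqn0 => /eqP ->.
rewrite leq_eqVlt => /orP [/eqP -> // | lt]; rewrite ltnS in lt.
apply: subset_trans (IH lt); apply/subsetP => x; rewrite restS; by case/andP.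
Qed.

Lemma cell_rest x i k : x \in cell i.+1 -> k <= i -> x \in rest k.
Proof. move=> xi ki; exact: (subsetP (rest_dec ki)) _ (subsetP (cell_sub i) _ xi). Qed.

Lemma cell_lt x i : x \in cell i.+1 -> i < m.
Proof.
move=> xi; rewrite ltnNge; apply/negP => mi.
by have := cell_rest xi mi; rewrite Hrm inE.
Qed.

Lemma disj x i j : i < j -> x \in cell j.+1 -> x \notin cell i.+1.
Proof. move=> ij xj; have := cell_rest xj ij; by rewrite restS => /andP []. Qed.

Lemma cell_uniq x i j : x \in cell i.+1 -> x \in cell j.+1 -> i = j.
Proof.
move=> xi xj; case: (ltngtP i j) => // h.
  by move: (disj h xj); rewrite xi.
by move: (disj h xi); rewrite xj.
Qed.

Lemma exists_cell x : exists i, x \in cell i.+1.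
Proof.
have [[|i] [j [i1 _ _ xi _]]] := (Hiff x x).1 (le_refl c x) => //.
by exists i.
Qed.

Lemma le_cell x y i j : x \in cell i.+1 -> y \in cell j.+1 -> le c x y = (i <= j).
Proof.
move=> xi yj; apply/idP/idP.
  case/Hiff => [[|i'] [[|j'] [//= _ ij _ xi' yj']]].
  by move: ij; rewrite -(cell_uniq xi xi') -(cell_uniq yj yj').
move=> ij; apply/Hiff; exists i.+1, j.+1; split => //; exact: cell_lt yj.
Qed.

Lemma cellP x i : x \in cell i.+1 -> exists2 l, l \in a i.+1 & x \in minset (sel p1 p2 l) (rest i).
Proof. by case/bigcupP => l la xl; exists l. Qed.

Lemma into_cell l i x y : l \in a i.+1 -> y \in minset (sel p1 p2 l) (rest i) ->
  x \in rest i -> le (sel p1 p2 l) x y -> x \in cell i.+1.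
Proof. move=> la ym xr lxy; apply/bigcupP; exists l => //; exact: minset_ge ym xr lxy. Qed.

Lemma notlt_rest k x y : y \in cell k.+1 -> ~~ lt c x y -> x \in rest k.
Proof.
move=> yk; have [j xj] := exists_cell x.
rewrite nlt_le (le_cell yk xj) => kj; exact: cell_rest xj kj.
Qed.

Lemma notle_rest k x y : y \in cell k.+1 -> ~~ le c x y -> x \in rest k.+1.
Proof.
move=> yk; have [j xj] := exists_cell x.
rewrite (le_cell xj yk) -ltnNge => kj; exact: cell_rest xj kj.
Qed.

Lemma fwd_basic (HW : 0 < #|W|) (a1 : a 1 = setT) :
  minset c [set: W] = minset p1 [set: W] :|: minset p2 [set: W].
Proof.
have c1 : cell 1 = minset p1 [set: W] :|: minset p2 [set: W].
  by rewrite /Defs.cell /= a1 bigcup_selT.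
rewrite -c1; apply/setP => x; apply/idP/idP.
  move=> xm; have [i xi] := exists_cell x.
  have ne : [set: W] != set0 by rewrite -cards_eq0 cardsT -lt0n HW.
  have [y ym] := minset_n0 p1 ne.
  have y1 : y \in cell 1 by rewrite c1 inE ym.
  have := minset_le xm (in_setT y); rewrite (le_cell xi y1) leqn0 => /eqP e.
  by rewrite -e.
move=> x1; apply/minsetP; split => // y _.
have [j yj] := exists_cell y; by rewrite (le_cell x1 yj).
Qed.

Lemma fwd_SPU x y z : lt p1 x y -> lt p2 z y -> lt c x y \/ lt c z y.
Proof.
move=> h1 h2; have [k yk] := exists_cell y.
case: (boolP (lt c x y)) => hx; [by left|]; case: (boolP (lt c z y)) => hz; [by right|].
exfalso; have xr := notlt_rest yk hx; have zr := notlt_rest yk hz.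
have [l la ym] := cellP yk.
case: (sel_cases p1 p2 l) => e; rewrite e in ym.
  by move: (lt_nle h1); rewrite (minset_le ym xr).
by move: (lt_nle h2); rewrite (minset_le ym zr).
Qed.

Lemma fwd_WPU x y z : le p1 x y -> le p2 z y -> le c x y \/ le c z y.
Proof.
move=> h1 h2; have [k yk] := exists_cell y.
case: (boolP (le c x y)) => hx; [by left|]; case: (boolP (le c z y)) => hz; [by right|].
exfalso; have := notle_rest yk hx; rewrite restS => /andP [xn xr].
have := notle_rest yk hz; rewrite restS => /andP [zn zr].
have [l la ym] := cellP yk.
case: (sel_cases p1 p2 l) => e.
  by move: xn; rewrite (into_cell la ym xr) // e.
by move: zn; rewrite (into_cell la ym zr) // e.
Qed.

Lemma fwd_NO1 x y z : lt p1 x y -> le p2 z y -> lt c x y \/ le c z y.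
Proof.
move=> h1 h2; have [k yk] := exists_cell y.
case: (boolP (lt c x y)) => hx; [by left|]; case: (boolP (le c z y)) => hz; [by right|].
exfalso; have xr := notlt_rest yk hx.
have := notle_rest yk hz; rewrite restS => /andP [zn zr].
have [l la ym] := cellP yk.
case: (sel_cases p1 p2 l) => e.
  by move: (lt_nle h1); rewrite -e (minset_le ym xr).
by move: zn; rewrite (into_cell la ym zr) // e.
Qed.

Lemma fwd_NO2 x y z : lt p2 x y -> le p1 z y -> lt c x y \/ le c z y.
Proof.
move=> h1 h2; have [k yk] := exists_cell y.
case: (boolP (lt c x y)) => hx; [by left|]; case: (boolP (le c z y)) => hz; [by right|].
exfalso; have xr := notlt_rest yk hx.
have := notle_rest yk hz; rewrite restS => /andP [zn zr].
have [l la ym] := cellP yk.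
case: (sel_cases p1 p2 l) => e.
  by move: zn; rewrite (into_cell la ym zr) // e.
by move: (lt_nle h1); rewrite -e (minset_le ym xr).
Qed.

End Fwd.


Theorem theorem1 (W : finType) (HW : (0 < #|W|)%N) (comb : combinator W) :
  TeamQueue comb <-> [/\ basic comb, SPU_plus comb, WPU_plus comb & NO comb].
Proof.
split.
  move=> TQ; split.
  - move=> p1 p2; have [a [_ a1 [m [Hrm _ Hiff]]]] := TQ p1 p2; exact: (@fwd_basic W (comb p1 p2) p1 p2 a m Hrm Hiff HW a1).
  - move=> p1 p2 x y z; have [a [_ a1 [m [Hrm _ Hiff]]]] := TQ p1 p2. exact: (@fwd_SPU W (comb p1 p2) p1 p2 a m Hrm Hiff x y z).
  - move=> p1 p2 x y z; have [a [_ a1 [m [Hrm _ Hiff]]]] := TQ p1 p2; exact: (@fwd_WPU W (comb p1 p2) p1 p2 a m Hrm Hiff x y z).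
  - move=> p1 p2 x y z; have [a [_ a1 [m [Hrm _ Hiff]]]] := TQ p1 p2.
    split; [exact: (@fwd_NO1 W (comb p1 p2) p1 p2 a m Hrm Hiff x y z)|exact: (@fwd_NO2 W (comb p1 p2) p1 p2 a m Hrm Hiff x y z)].
case=> hB hS hW hN p1 p2.
apply: (back_TQ (hB p1 p2) (hS p1 p2) (hW p1 p2)).
- by move=> x y z; case: (hN p1 p2 x y z).
- by move=> x y z; case: (hN p1 p2 x y z).
Qed.
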